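(* Let $k, \ell \in \mathbb{N}$. Then $|\mathcal{J}(k,\ell)_n| = O(n^{k-1}F_{n,\ell})$ as $n \to \infty$, where $\mathcal{J}(k,\ell)_n$ is the set of members of $\mathcal{J}(k,\ell)$ with vertex set $[n]$.
   Context: Ordered graphs of order $n$ have vertex set $[n]$ with natural order; $A\leqslant B$ means $A$ is an induced ordered subgraph of $B$ (via an injective order-preserving map preserving adjacency and non-adjacency). $G_1+\dots+G_m$ places copies of $G_1,\dots,G_m$ consecutively from left to right with no edges between copies. For $n\in\mathbb{N}$: $J^{(n)}_1=K_n$; $J^{(n)}_2$ on $[n]$ with edge set $\{1n\}$ if $n\geqslant2$ (empty if $n=1$); $J^{(n)}_3$ on $[n]$ with edges $\{1i: 2\leqslant i\leqslant n\}$; $J^{(n)}_4$ on $[n]$ with edges $\{in: 1\leqslant i\leqslant n-1\}$; $L^{(n)}$ on $[n]$ with edges $\{i(i+1): 1\leqslant i\leqslant n-1\}$; $Q_1$ on $[4]$ with edges $\{13,24\}$; $Q_2$ on $[4]$ with edges $\{14,23\}$. For $\ell\in\{1,2,3\}$, $\mathcal{J}_\ell=\{J^{(n)}_i: i\in[4], n\leqslant\ell\}\cup\{L^{(n)}: n\leqslant\ell\}$; for $\ell\geqslant4$, $\mathcal{J}_\ell$ is this set together with $Q_1,Q_2$. An ordered graph $G$ is in $\mathcal{J}(k,\ell)$ iff there are $s\leqslant k$ ordered graphs $A_1,\dots,A_s$ with $G=A_1+\dots+A_s$ such that each $A_i=B^{(i)}_1+\dots+B^{(i)}_{t(i)}$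 with all $B^{(i)}_j\in\mathcal{J}_\ell$ and, for every pair $j,j'$, $B^{(i)}_j\leqslant B^{(i)}_{j'}$ or $B^{(i)}_{j'}\leqslant B^{(i)}_j$. $F_{n,\ell}$: $F_{n,\ell}=0$ for $n<0$, $F_{0,\ell}=1$, $F_{n,\ell}=F_{n-1,\ell}+\dots+F_{n-\ell,\ell}$ for $n\geqslant1$. *)

(* Defs.v *)
From mathcomp Require Import all_boot.
From mathcomp Require Import boolp.
Set Implicit Arguments. Unset Strict Implicit. Unset Printing Implicit Defensive.

(* An ordered graph of order [ord] on vertices {0,..,ord-1} (vertex i here is
   vertex i+1 of the paper).  Adjacency of i < j < ord is [oe i j]; values of
   [oe] outside { (i,j) | i < j < ord } are irrelevant. *)
Record OG := MkOG { ord : nat; oe : nat -> nat -> bool }.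

Definition og_eq (G H : OG) : Prop :=
  ord G = ord H /\ forall i j, i < j -> j < ord G -> oe G i j = oe H i j.

Definition og_le (A B : OG) : Prop :=
  exists f : nat -> nat,
    (forall i j, i < j -> j < ord A -> f i < f j) /\
    (forall i, i < ord A -> f i < ord B) /\
    (forall i j, i < j -> j < ord A -> oe A i j = oe B (f i) (f j)).

Definition og_cat (A B : OG) : OG :=
  MkOG (ord A + ord B)
       (fun i j => if j < ord A then oe A i j
                   else if ord A <= i then oe B (i - ord A) (j - ord A)
                   else false).

Definition og_empty : OG := MkOG 0 (fun _ _ => false).

Definition og_sum (s : seq OG) : OG := foldr og_cat og_empty s.

Definition J1 (n : nat) : OG := MkOG n (fun _ _ => true).
Definition J2 (n : nat) : OG := MkOG n (fun i j => (i == 0) && (j == n.-1)).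
Definition J3 (n : nat) : OG := MkOG n (fun i _ => i == 0).
Definition J4 (n : nat) : OG := MkOG n (fun _ j => j == n.-1).
Definition Lpath (n : nat) : OG := MkOG n (fun i j => j == i.+1).
Definition Q1 : OG := MkOG 4 (fun i j => ((i == 0) && (j == 2)) || ((i == 1) && (j == 3))).
Definition Q2 : OG := MkOG 4 (fun i j => ((i == 0) && (j == 3)) || ((i == 1) && (j == 2))).

Definition inJfam (l : nat) (B : OG) : Prop :=
  (exists n, 1 <= n /\ n <= l /\
     (og_eq B (J1 n) \/ og_eq B (J2 n) \/ og_eq B (J3 n) \/ og_eq B (J4 n)
      \/ og_eq B (Lpath n)))
  \/ (4 <= l /\ (og_eq B Q1 \/ og_eq B Q2)).

Definition good_blocks (l : nat) (Bs : seq OG) : Prop :=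
  (forall j, j < size Bs -> inJfam l (nth og_empty Bs j)) /\
  (forall j j', j < size Bs -> j' < size Bs ->
     og_le (nth og_empty Bs j) (nth og_empty Bs j') \/
     og_le (nth og_empty Bs j') (nth og_empty Bs j)).

Definition inJkl (k l : nat) (G : OG) : Prop :=
  exists As : seq (seq OG),
    size As <= k /\
    (forall i, i < size As -> good_blocks l (nth [::] As i)) /\
    og_eq G (og_sum [seq og_sum Bs | Bs <- As]).

Definition og_of_set (n : nat) (E : {set 'I_n * 'I_n}) : OG :=
  MkOG n (fun i j => [exists p in E, (nat_of_ord p.1 == i) && (nat_of_ord p.2 == j)]).

Definition upper_pairs (n : nat) : {set 'I_n * 'I_n} :=
  [set p : 'I_n * 'I_n | nat_of_ord p.1 < nat_of_ord p.2].

Definition numJ (k l n : nat) : nat :=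
  #|[set E : {set 'I_n * 'I_n} |
      (E \subset upper_pairs n) && `[< inJkl k l (og_of_set E) >] ]|.

(* F_{n,l}: F_{n} = 0 for n<0, F_0 = 1, F_n = F_{n-1} + ... + F_{n-l}.
   Computed with fuel (fuel >= n suffices). *)
Fixpoint Faux (l fuel n : nat) : nat :=
  match fuel with
  | 0 => 1
  | fuel'.+1 =>
      if n is 0 then 1
      else \sum_(1 <= i < l.+1 | i <= n) Faux l fuel' (n - i)
  end.

Definition Fnl (n l : nat) : nat := Faux l n n.

Lemma Fnl_sanity : [:: Fnl 0 2; Fnl 1 2; Fnl 2 2; Fnl 3 2; Fnl 4 2; Fnl 5 2; Fnl 4 3]
                   = [:: 1; 1; 2; 3; 5; 8; 7].
Proof. rewrite /Fnl /=. by rewrite !unlock. Qed.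

(* Main.v *)
Require Import Defs.
From mathcomp Require Import all_boot boolp zify.
Set Implicit Arguments. Unset Strict Implicit. Unset Printing Implicit Defensive.

Lemma og_eq_refl G : og_eq G G.
Proof. by split. Qed.

Lemma og_eq_sym G H : og_eq G H -> og_eq H G.
Proof. move=> [e h]; split; first by rewrite e.
move=> i j ij jn; rewrite h // e; done. Qed.

Lemma og_eq_trans G H K : og_eq G H -> og_eq H K -> og_eq G K.
Proof.
move=> [e1 h1] [e2 h2]; split; first by rewrite e1.
by move=> i j ij jn; rewrite h1 // h2 // -e1.
Qed.

Lemma og_cat_eq A A' B B' : og_eq A A' -> og_eq B B' -> og_eq (og_cat A B) (og_cat A' B').
Proof.
move=> [ea ha] [eb hb]; split; first by rewrite /= ea eb.
move=> i j ij /= jn; rewrite -ea.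
case: ifP => jA; first by rewrite ha.
case: ifP => // iA; rewrite hb //; lia.
Qed.

Lemma og_sum_eq s t : size s = size t ->
  (forall i, i < size s -> og_eq (nth og_empty s i) (nth og_empty t i)) ->
  og_eq (og_sum s) (og_sum t).
Proof.
elim: s t => [|x s IH] [|y t] //= st h.
case: st => st; apply: og_cat_eq; first exact: (h 0).
by apply: IH => // i ilt; apply: (h i.+1).
Qed.

Lemma og_sum_map (s : seq OG) f :
  (forall i, i < size s -> og_eq (nth og_empty s i) (f (nth og_empty s i))) ->
  og_eq (og_sum s) (og_sum (map f s)).
Proof.
move=> h; apply: og_sum_eq; rewrite ?size_map // => i ilt.
by rewrite (nth_map og_empty) //; apply: h.
Qed.

Lemma og_cat_empty X : og_eq (og_cat og_empty X) X.
Proof. split=> //= i j ij jn; by rewrite !subn0. Qed.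

Lemma og_sum_pad s j : og_eq (og_sum (s ++ nseq j og_empty)) (og_sum s).
Proof.
elim: s => [|x s IH] /=.
  elim: j => [|j IHj] /=; first exact: og_eq_refl.
  exact: og_eq_trans (og_cat_empty _) IHj.
by apply: og_cat_eq; [exact: og_eq_refl | exact: IH].
Qed.

Lemma ord_og_sum s : ord (og_sum s) = sumn (map ord s).
Proof. by elim: s => //= x s ->. Qed.

Lemma og_le_eq A B : og_le A B -> ord A = ord B -> og_eq A B.
Proof.
move=> [f [hinc [hlt he]]] eAB; split=> // i j ij jn.
have lo : forall d, d < ord A -> d <= f d.
  elim=> [|d IH] dl //; have := hinc d d.+1 (ltnSn d) dl.
  by move: (IH (ltnW dl)); lia.
have hi : forall d i0, i0 + d < ord A -> f i0 + d < ord A.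
  elim=> [|d IH] i0 dl.
    rewrite addn0 eAB; apply: hlt; lia.
  have h1 : f i0.+1 + d < ord A by apply: IH; lia.
  have h2 : f i0 < f i0.+1 by apply: hinc; lia.
  lia.
have key : forall i0, i0 < ord A -> f i0 = i0.
  move=> i0 i0n; have := hi (ord A - i0.+1) i0 ltac:(lia); have := lo i0 i0n; lia.
rewrite he // !key //; exact: ltn_trans jn.
Qed.

Definition std (t m : nat) : OG :=
  match t with 0 => J1 m | 1 => J2 m | 2 => J3 m | 3 => J4 m | 4 => Lpath m
  | 5 => Q1 | _ => Q2 end.

Definition tyof (B : OG) : nat :=
  if [pick t : 'I_7 | `[< og_eq B (std t (ord B)) >]] is Some t then val t else 0.

Lemma tyof_lt B : tyof B < 7.
Proof. rewrite /tyof; case: pickP => [t _|_] //; exact: ltn_ord. Qed.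

Lemma inJfam_ord l B : inJfam l B -> 1 <= ord B <= l.
Proof.
case=> [[n [n1 [nl h]]]|[l4 h]].
  by case: h => [[e _]|[[e _]|[[e _]|[[e _]|[e _]]]]]; rewrite e n1.
by case: h => [[e _]|[e _]]; rewrite e /=; lia.
Qed.

Lemma tyofP l B : inJfam l B -> og_eq B (std (tyof B) (ord B)).
Proof.
move=> hB; rewrite /tyof; case: pickP => [t /asboolP //|no].
exfalso.
have ex : exists t : 'I_7, og_eq B (std t (ord B)).
  case: hB => [[n [n1 [nl h]]]|[l4 h]].
    case: h => [h|[h|[h|[h|h]]]]; have e := proj1 h.
    - by exists (@Ordinal 7 0 isT); rewrite e.
    - by exists (@Ordinal 7 1 isT); rewrite e.
    - by exists (@Ordinal 7 2 isT); rewrite e.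
    - by exists (@Ordinal 7 3 isT); rewrite e.
    - by exists (@Ordinal 7 4 isT); rewrite e.
  case: h => h.
  - by exists (@Ordinal 7 5 isT).
  - by exists (@Ordinal 7 6 isT).
case: ex => t ht; have := no t; by move/asboolP: ht => ->.
Qed.

Definition coltype (l : nat) (Bs : seq OG) : seq nat :=
  [seq tyof (nth og_empty Bs (find (fun B => ord B == m) Bs)) | m <- iota 0 l.+1].

Lemma coltypeP l Bs : good_blocks l Bs -> forall j, j < size Bs ->
  og_eq (nth og_empty Bs j)
        (std (nth 0 (coltype l Bs) (ord (nth og_empty Bs j))) (ord (nth og_empty Bs j))).
Proof.
move=> [hJ hC] j jlt; set B := nth og_empty Bs j.
have /andP[_ ml] := inJfam_ord (hJ j jlt).
rewrite /coltype (nth_map 0) ?size_iota ?ltnS // nth_iota ?ltnS // add0n.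
set P := fun B0 => ord B0 == ord B.
have hasP : has P Bs by apply/(has_nthP og_empty); exists j => //; rewrite /P.
set j0 := find P Bs.
have j0lt : j0 < size Bs by rewrite -has_find.
have /eqP e0 : P (nth og_empty Bs j0) by apply: nth_find.
apply: og_eq_trans (_ : og_eq B (nth og_empty Bs j0)) _.
  case: (hC j j0 jlt j0lt) => h.
    exact: og_le_eq h (esym e0).
  exact: og_eq_sym (og_le_eq h e0).
rewrite -e0; exact: tyofP (hJ j0 j0lt).
Qed.

Fixpoint tuples (T : Type) (s : seq T) (m : nat) : seq (seq T) :=
  if m is m'.+1 then [seq x :: t | x <- s, t <- tuples s m'] else [:: [::]].

Lemma size_tuples (T : Type) (s : seq T) m : size (tuples s m) = size s ^ m.
Proof. by elim: m => [|m IH] //=; rewrite size_allpairs IH expnS. Qed.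

Lemma mem_tuples (T : eqType) (s : seq T) t :
  all (fun x => x \in s) t -> t \in tuples s (size t).
Proof.
elim: t => [|x t IH] //= /andP[xs ts].
exact: (allpairs_f (fun a b => a :: b) xs (IH ts)).
Qed.

Fixpoint compsA (l fuel n : nat) : seq (seq nat) :=
  match fuel with
  | 0 => [:: [::]]
  | fuel'.+1 =>
      if n is 0 then [:: [::]]
      else flatten [seq [seq i :: c | c <- compsA l fuel' (n - i)] | i <- [seq i <- iota 1 l | i <= n]]
  end.

Lemma size_compsA l fuel n : size (compsA l fuel n) = Faux l fuel n.
Proof.
elim: fuel n => [|f IH] [|n] //=.
rewrite size_flatten /shape -map_comp sumnE big_map big_filter.
rewrite /index_iota subn1 /=.
by apply: eq_bigr => i _; rewrite /= size_map IH.
Qed.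

Lemma mem_compsA l fuel n c : n <= fuel -> sumn c = n ->
  all (fun x => 0 < x <= l) c -> c \in compsA l fuel n.
Proof.
elim: fuel n c => [|f IH] n c.
  rewrite leqn0 => /eqP -> ; case: c => [|x c] //= e /andP[/andP[x0 _] _]; lia.
case: n => [|n].
  by case: c => [|x c] //= _ e /andP[/andP[x0 _] _]; lia.
case: c => [|x c] //= nf e /andP[/andP[x0 xl] cl].
apply/flatten_mapP; exists x.
  by rewrite mem_filter mem_iota x0 /=; lia.
apply: map_f; apply: IH => //; lia.
Qed.

Lemma my_reshape_rcons (ss : seq (seq nat)) m n :
  size ss = m.+1 -> size (last [::] ss) <= n ->
  reshape (rcons (shape (take m ss)) n) (flatten ss) = ss.
Proof.
elim: ss m => [|x ss IH] m //= [e].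
case: m e => [|m] e.
  by case: ss IH e => // _ _ /= xn; rewrite cats0 take_oversize.
move=> hl /=; rewrite take_size_cat // drop_size_cat // IH //.
by case: ss e hl {IH}.
Qed.

Lemma mem_tuples' (T : eqType) (s : seq T) t m :
  size t = m -> all (fun x => x \in s) t -> t \in tuples s m.
Proof. by move=> <-; apply: mem_tuples. Qed.

Definition build (k : nat) (cols tys : seq (seq nat)) : OG :=
  og_sum [seq og_sum [seq std (nth 0 (nth [::] tys i) m) m | m <- nth [::] cols i]
         | i <- iota 0 k].

Definition dec (k n : nat) (c : seq nat * seq nat * seq (seq nat)) : {set 'I_n * 'I_n} :=
  [set p : 'I_n * 'I_n | (nat_of_ord p.1 < nat_of_ord p.2) &&
     oe (build k (reshape (rcons c.1.2 n) c.1.1) c.2) p.1 p.2].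

Definition allcodes (k l n : nat) : seq (seq nat * seq nat * seq (seq nat)) :=
  [seq (a, b) | a <- [seq (x, y) | x <- compsA l n n, y <- tuples (iota 0 n.+1) (k - 1)],
                b <- tuples (tuples (iota 0 7) l.+1) k].

Lemma size_le_sumn (s : seq nat) : all (fun x => 0 < x) s -> size s <= sumn s.
Proof. elim: s => //= x s IH /andP[x0 /IH]; lia. Qed.

Lemma sumn_le_flatten (ss : seq (seq nat)) s : s \in ss -> sumn s <= sumn (flatten ss).
Proof.
elim: ss => //= s0 ss IH; rewrite in_cons sumn_cat => /orP[/eqP ->|/IH]; lia.
Qed.

Lemma structure k l n (E : {set 'I_n * 'I_n}) : 1 <= k ->
  E \subset upper_pairs n -> inJkl k l (og_of_set E) ->
  exists2 c, c \in allcodes k l n & E = dec k n c.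
Proof.
move=> hk sub [As [szAs [good heq]]].
set As' := As ++ nseq (k - size As) [::].
have szA' : size As' = k by rewrite size_cat size_nseq; lia.
have good' : forall i, i < size As' -> good_blocks l (nth [::] As' i).
  move=> i ilt; rewrite nth_cat; case: ifP => [/good //|_].
  by rewrite nth_nseq; case: ifP.
have heq' : og_eq (og_of_set E) (og_sum (map og_sum As')).
  apply: og_eq_trans heq (og_eq_sym _).
  by rewrite map_cat map_nseq; apply: og_sum_pad.
set cols := map (map ord) As'.
set tys := map (coltype l) As'.
have hB : og_eq (og_sum (map og_sum As')) (build k cols tys).
  apply: og_sum_eq; first by rewrite !size_map size_iota.
  move=> i; rewrite size_map => ilt.
  rewrite (nth_map [::]) // (nth_map 0) ?size_iota -?szA' // nth_iota -?szA' // add0n.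
  rewrite /cols /tys !(nth_map [::]) // -map_comp.
  apply: og_sum_map => j jlt; exact: coltypeP (good' i ilt) j jlt.
have hE := og_eq_trans heq' hB.
have ordn : sumn (flatten cols) = n.
  transitivity (ord (og_sum (map og_sum As'))); last by rewrite -(proj1 heq').
  rewrite ord_og_sum sumn_flatten -map_comp /cols -map_comp.
  by congr sumn; apply: eq_map => Bs /=; rewrite ord_og_sum.
have parts : forall x, x \in flatten cols -> 0 < x <= l.
  move=> x /flattenP [col /(nthP [::]) [i ilt <-]].
  rewrite /cols size_map in ilt; rewrite (nth_map [::]) //.
  move=> /(nthP 0) [j]; rewrite size_map => jlt <-; rewrite (nth_map og_empty) //.
  exact: inJfam_ord ((good' i ilt).1 j jlt).
have colsize : forall col, col \in cols -> size col <= n.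
  move=> col ccol; rewrite -ordn; apply: leq_trans (sumn_le_flatten ccol).
  apply: size_le_sumn; apply/allP => x xc.
  by have /andP[] := parts x (introT flattenP (ex_intro2 _ _ col ccol xc)).
have szcols : size cols = k by rewrite size_map.
exists (flatten cols, shape (take (k - 1) cols), tys).
  apply: (allpairs_f (fun a b => (a, b))); last first.
    apply: mem_tuples'; first by rewrite size_map.
    apply/allP => ty /(nthP [::]) [i]; rewrite size_map => ilt <-.
    rewrite (nth_map [::]) // /coltype.
    apply: mem_tuples'; first by rewrite size_map size_iota.
    apply/allP => x /mapP [m _ ->].
    by rewrite mem_iota /=; exact: tyof_lt.
  apply: (allpairs_f (fun a b => (a, b))).
    apply: mem_compsA => //; apply/allP => x; exact: parts.
  apply: mem_tuples'.
    by rewrite size_map size_take szcols; case: ifP => //; lia.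
  apply/allP => x /mapP [col /mem_take ccol ->].
  by rewrite mem_iota /= add0n ltnS colsize.
rewrite /dec /= my_reshape_rcons; first last.
- have := mem_last [::] cols; rewrite in_cons => /orP[/eqP -> //|]; exact: colsize.
- by rewrite szcols; lia.
apply/setP => p; rewrite inE.
have hp : nat_of_ord p.1 < p.2 -> oe (og_of_set E) p.1 p.2 = oe (build k cols tys) p.1 p.2.
  by move=> lt; apply: (proj2 hE) => //=.
case: (boolP (p \in E)) => pE.
  have lt : nat_of_ord p.1 < p.2 by move: (subsetP sub p pE); rewrite inE.
  rewrite lt /= -hp //=.
  by apply/esym/existsP; exists p; rewrite pE !eqxx.
case lt : (nat_of_ord p.1 < p.2) => //=.
rewrite -hp //=; apply/esym/negbTE/negP => /existsP [q /andP [qE /andP[/eqP e1 /eqP e2]]].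
have eq : q = p.
  by move: q p e1 e2 {pE hp lt qE} => [q1 q2] [p1 p2] /= e1 e2; congr pair; apply: val_inj.
by move: pE; rewrite -eq qE.
Qed.

Lemma exp_mono m p e : m <= p -> m ^ e <= p ^ e.
Proof. move=> mp; elim: e => [|e IH] //; rewrite !expnS; exact: leq_mul. Qed.

Theorem lemma26 (k l : nat) (hk : 1 <= k) (hl : 1 <= l) :
  exists C N : nat, forall n : nat, N <= n ->
    numJ k l n <= C * n ^ (k - 1) * Fnl n l.
Proof.
exists (2 ^ (k - 1) * (7 ^ l.+1) ^ k), 1 => n n1.
have h1 : numJ k l n <= size (map (dec k n) (allcodes k l n)).
  rewrite /numJ; apply: leq_trans (card_size _); apply: subset_leq_card.
  apply/subsetP => E; rewrite inE => /andP[sub /asboolP h].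
  have [c cin ->] := structure hk sub h; exact: map_f.
apply: leq_trans h1 _.
rewrite size_map /allcodes !size_allpairs size_compsA !size_tuples !size_iota.
rewrite -/(Fnl n l).
have h2 : n.+1 ^ (k - 1) <= 2 ^ (k - 1) * n ^ (k - 1).
  rewrite -expnMn; apply: exp_mono; lia.
set F := Fnl n l; set T := (7 ^ l.+1) ^ k.
rewrite (mulnC F) -mulnA (mulnC F) mulnA.
rewrite [X in _ <= X](_ : _ = 2 ^ (k - 1) * n ^ (k - 1) * T * F); last by lia.
by rewrite leq_mul2r leq_mul2r h2 !orbT.
Qed.
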